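(* Let $\varphi:(0,1]\to[0,1]$ be an increasing submultiplicative function (i.e. $\varphi(xy)\le\varphi(x)\varphi(y)$ for $x,y\in(0,1]$) such that $\varphi(\lambda)<1$ for some $\lambda\in(0,1)$. Then there is a constant $C>0$ such that $$\varphi(x)\le \frac{C}{1+\log(1/x)}\qquad\text{for all }x\in(0,1].$$ *)

(* Defs.v *)
From Stdlib Require Import Reals.
Open Scope R_scope.

(* Main.v *)
Require Import Defs.
From Stdlib Require Import Reals.
From Stdlib Require Import Lra Lia Psatz.
Open Scope R_scope.

Lemma bern (d : R) (m : nat) : 0 <= d -> 1 + INR m * d <= (1 + d) ^ m.
Proof.
  intros Hd. induction m as [|m IH].
  - simpl. lra.
  - rewrite S_INR. simpl.
    assert (0 <= INR m) by apply pos_INR.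
    nra.
Qed.

Lemma keyb (q L : R) (m : nat) : 0 < q < 1 -> 0 < L ->
  q ^ m * (1 + (INR m + 1) * L) <= 1 + L + L / (/ q - 1).
Proof.
  intros Hq HL.
  set (d := / q - 1).
  assert (Hd : 0 < d).
  { unfold d. assert (1 < / q). { rewrite <- Rinv_1. apply Rinv_lt_contravar; lra. } lra. }
  assert (Hb := bern d m (Rlt_le _ _ Hd)).
  assert (H1d : 1 + d = / q) by (unfold d; ring).
  rewrite H1d in Hb. rewrite pow_inv in Hb.
  set (P := q ^ m) in *.
  assert (HP : 0 < P) by (apply pow_lt; lra).
  assert (HPi : P * / P = 1) by (apply Rinv_r; lra).
  assert (Hm : 0 <= INR m) by apply pos_INR.
  set (K := 1 + L + L / d).
  assert (HLd : L / d * d = L) by (field; lra).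
  assert (HLd0 : 0 <= L / d) by (apply Rlt_le, Rdiv_lt_0_compat; lra).
  assert (HK : 1 + (INR m + 1) * L <= K * (1 + INR m * d)).
  { unfold K.
    replace ((1 + L + L / d) * (1 + INR m * d)) with
      (1 + L + L / d + INR m * d * (1 + L) + INR m * (L / d * d)) by ring.
    rewrite HLd. assert (0 <= INR m * d * (1 + L)) by (apply Rmult_le_pos; [apply Rmult_le_pos|]; lra).
    lra. }
  assert (HP1 : P * (1 + INR m * d) <= 1).
  { rewrite <- HPi. apply Rmult_le_compat_l; lra. }
  assert (0 <= K) by (unfold K; lra).
  nra.
Qed.

Theorem lemma2p1 (phi : R -> R)
  (Hrange : forall x, 0 < x <= 1 -> 0 <= phi x <= 1)
  (Hmono : forall x y, 0 < x <= 1 -> 0 < y <= 1 -> x <= y -> phi x <= phi y)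
  (Hsub : forall x y, 0 < x <= 1 -> 0 < y <= 1 -> phi (x * y) <= phi x * phi y)
  (Hlam : exists lam, 0 < lam < 1 /\ phi lam < 1) :
  exists C, 0 < C /\
    forall x, 0 < x <= 1 -> phi x <= C / (1 + ln (/ x)).
Proof.
  destruct Hlam as [lam [Hl Hpl]].
  set (q := Rmax (phi lam) (1/2)).
  assert (Hq : 0 < q < 1).
  { unfold q. split. apply Rlt_le_trans with (1/2). lra. apply Rmax_r.
    apply Rmax_lub_lt; lra. }
  assert (Hpq : 0 <= phi lam <= q).
  { split. apply Hrange; lra. apply Rmax_l. }
  set (L := - ln lam).
  assert (HL : 0 < L).
  { unfold L. assert (ln lam < 0). { rewrite <- ln_1. apply ln_increasing; lra. } lra. }
  set (C := 1 + L + L / (/ q - 1)).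
  assert (Hpow : forall k, 0 < lam ^ k <= 1).
  { intro k. split. apply pow_lt; lra. rewrite <- (pow1 k). apply pow_incr; lra. }
  assert (Hphik : forall k, phi (lam ^ k) <= q ^ k).
  { induction k as [|k IH].
    - simpl. apply Hrange; lra.
    - simpl. apply Rle_trans with (phi lam * phi (lam ^ k)).
      apply Hsub; [lra| apply Hpow].
      assert (0 <= phi (lam ^ k)) by (apply Hrange, Hpow).
      apply Rmult_le_compat; lra. }
  assert (Hln : forall x k, 0 < x -> lam ^ k < x -> ln (/ x) < INR k * L).
  { intros x k Hx Hk. rewrite ln_Rinv by lra. unfold L.
    assert (ln (lam ^ k) < ln x) by (apply ln_increasing; [apply Hpow|lra]).
    rewrite ln_pow in H by lra. lra. }
  assert (Main : forall n x, 0 < x <= 1 -> lam ^ (S n) < x -> phi x * (1 + ln (/ x)) <= C).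
  { induction n as [|n IH]; intros x Hx Hk.
    - assert (H0 := Hln x 1%nat (proj1 Hx) Hk). simpl INR in H0.
      assert (0 <= ln (/ x)).
      { rewrite ln_Rinv by lra. assert (ln x <= ln 1). 
        { destruct (Req_dec x 1). subst; lra. left; apply ln_increasing; lra. }
        rewrite ln_1 in H. lra. }
      assert (0 <= phi x <= 1) by (apply Hrange; lra).
      assert (C >= 1 + L).
      { unfold C. assert (0 <= L / (/ q - 1)); [|lra].
        apply Rlt_le, Rdiv_lt_0_compat; [lra|].
        assert (1 < / q). { rewrite <- Rinv_1. apply Rinv_lt_contravar; lra. } lra. }
      nra.
    - destruct (Rlt_or_le (lam ^ S n) x) as [Hc|Hc].
      + apply IH; auto.
      + assert (H0 := Hln x (S (S n)) (proj1 Hx) Hk).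
        assert (0 <= ln (/ x)).
        { rewrite ln_Rinv by lra. assert (ln x <= ln 1). 
          { destruct (Req_dec x 1). subst; lra. left; apply ln_increasing; lra. }
          rewrite ln_1 in H. lra. }
        assert (Hp : phi x <= q ^ S n).
        { apply Rle_trans with (phi (lam ^ S n)). apply Hmono; [exact Hx | apply Hpow | exact Hc]. apply Hphik. }
        assert (0 <= phi x) by (apply Hrange; lra).
        assert (Hkb := keyb q L (S n) Hq HL).
        rewrite (S_INR (S n)) in H0.
        fold C in Hkb.
        apply Rle_trans with (q ^ S n * (1 + (INR (S n) + 1) * L)); [|exact Hkb].
        apply Rmult_le_compat; lra. }
  exists C. split.
  { unfold C. assert (0 <= L / (/ q - 1)); [|lra].
    apply Rlt_le, Rdiv_lt_0_compat; [lra|].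
    assert (1 < / q). { rewrite <- Rinv_1. apply Rinv_lt_contravar; lra. } lra. }
  intros x Hx.
  destruct (pow_lt_1_zero lam ltac:(rewrite Rabs_right; lra) x (proj1 Hx)) as [N HN].
  assert (HS := HN (S N) ltac:(lia)). rewrite Rabs_right in HS by (left; apply Hpow).
  assert (HM := Main N x Hx HS).
  assert (0 <= ln (/ x)).
  { rewrite ln_Rinv by lra. assert (ln x <= ln 1). 
    { destruct (Req_dec x 1). subst; lra. left; apply ln_increasing; lra. }
    rewrite ln_1 in H. lra. }
  apply Rmult_le_reg_r with (1 + ln (/ x)); [lra|].
  unfold Rdiv. rewrite Rmult_assoc, Rinv_l by lra. lra.
Qed.
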